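(* Let $(p,f)$ be an SCF-RT rationalizable within the class of all RUM-CFs, let $(x,y)\in D$, and for $t\geq0$ let $q(x,y)(t)=\frac{p(x,y)f(x,y)(t)}{p(y,x)f(y,x)(t)}$. If $q(x,y)(t)\geq1$ for almost all $t\geq0$, then every RUM-CF $(u,g,r)$ rationalizing $(p,f)$ satisfies $u(x)\geq u(y)$. If additionally $q(x,y)(t)>1$ on a set of $t$ of positive Lebesgue measure, then every such model satisfies $u(x)>u(y)$.
   Context: $X$ is a finite set of options; $C=\{(x,y): x,y\in X,\ x\neq y\}$; $D\subseteq C$ is a fixed non-empty set with $(x,y)\in D\Rightarrow (y,x)\in D$. An SCF $p$ assigns to each $(x,y)\in D$ a number $p(x,y)>0$ with $p(x,y)+p(y,x)=1$. An SCF-RT is a pair $(p,f)$ where $p$ is an SCF and $f$ assigns to each $(x,y)\in D$ a strictly positive density $f(x,y)$ on $\mathbb{R}^+$ with cdf $F(x,y)$. A RUM is a pair $(u,g)$ with $u:X\to\mathbb{R}$ and $g$ assigning to each $(x,y)\in C$ a density $g(x,y)$ on $\mathbb{R}$ (cdf $G(x,y)$) with $\int v\,g(x,y)(v)\,dv=u(x)-u(y)$, $g(x,y)(v)=g(y,x)(-v)$ for all $v$, and connected support. A RUM-CF is $(u,g,r)$ with $(u,g)$ a RUM and $r:\mathbb{R}^{++}\to\mathbb{R}^+$ continuous, strictly decreasing where $r(v)>0$, $\lim_{v\to0}r(v)=\infty$, $\lim_{v\to\infty}r(v)=0$; $r^{-1}(t)$ ($t>0$) is the inverse of $r$ restricted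 to $\{r>0\}$. It rationalizes $(p,f)$ if for all $(x,y)\in D$: $G(x,y)(0)=p(y,x)$ and $\frac{1-G(x,y)(r^{-1}(t))}{1-G(x,y)(0)}=F(x,y)(t)$ for all $t>0$. *)

(* Defs.v *)
From HB Require Import structures.
From mathcomp Require Import all_boot all_order all_algebra.
From mathcomp Require Import all_classical all_reals all_analysis.
Set Implicit Arguments. Unset Strict Implicit. Unset Printing Implicit Defensive.
Import Order.TTheory GRing.Theory Num.Theory.
Import numFieldNormedType.Exports.
Local Open Scope classical_set_scope.
Local Open Scope ring_scope.

Section Defs.
Variable R : realType.
Notation leb := (@lebesgue_measure R).

Definition density (g : R -> R) : Prop :=
  measurable_fun setT g /\ (forall v, 0 <= g v) /\
  (\int[leb]_(v in setT) (g v)%:E = 1)%E.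

Definition cdfR (g : R -> R) (s : R) : R := Rintegral leb `]-oo, s] g.

Definition pos_density (f : R -> R) : Prop :=
  measurable_fun (`[0%R, +oo[%classic : set R) f /\ (forall t, 0 <= t -> 0 < f t) /\
  (\int[leb]_(t in (`[0%R, +oo[%classic : set R)) (f t)%:E = 1)%E.

Definition cdfP (f : R -> R) (t : R) : R := Rintegral leb `[0, t] f.

Variable X : finType.

Definition isD (D : {set X * X}) : Prop :=
  (forall x y, (x, y) \in D -> x != y) /\ D != finset.set0 /\
  (forall x y, (x, y) \in D -> (y, x) \in D).

Definition SCF (D : {set X * X}) (p : X -> X -> R) : Prop :=
  forall x y, (x, y) \in D -> 0 < p x y /\ p x y + p y x = 1.

Definition SCF_RT (D : {set X * X}) (p : X -> X -> R) (f : X -> X -> R -> R)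
  : Prop :=
  SCF D p /\ forall x y, (x, y) \in D -> pos_density (f x y).

Definition RUM (u : X -> R) (g : X -> X -> R -> R) : Prop :=
  forall x y, x != y ->
    density (g x y) /\
    leb.-integrable setT (fun v => (v * g x y v)%:E) /\
    (\int[leb]_(v in setT) (v * g x y v)%:E = (u x - u y)%:E)%E /\
    (forall v, g x y v = g y x (- v)) /\
    connected [set v | 0 < g x y v].

(* r : R^{++} -> R^+ (only values on ]0,+oo[ matter) *)
Definition CF (r : R -> R) : Prop :=
  (forall v, 0 < v -> 0 <= r v) /\
  {within `]0, +oo[, continuous r} /\
  (forall v w, 0 < v -> v < w -> 0 < r v -> 0 < r w -> r w < r v) /\
  (r x @[x --> 0^'+] --> +oo) /\
  (r x @[x --> +oo] --> 0).

Definition RUM_CF (u : X -> R) (g : X -> X -> R -> R) (r : R -> R) : Prop :=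
  RUM u g /\ CF r.

(* (u,g,r) rationalizes (p,f).  r^{-1}(t), t > 0, is the (unique) v > 0
   with r v = t. *)
Definition rationalizes (D : {set X * X}) (p : X -> X -> R)
  (f : X -> X -> R -> R) (u : X -> R) (g : X -> X -> R -> R) (r : R -> R)
  : Prop :=
  forall x y, (x, y) \in D ->
    cdfR (g x y) 0 = p y x /\
    forall t, 0 < t -> forall v, 0 < v -> r v = t ->
      (1 - cdfR (g x y) v) / (1 - cdfR (g x y) 0) = cdfP (f x y) t.

Definition rationalizable (D : {set X * X}) (p : X -> X -> R)
  (f : X -> X -> R -> R) : Prop :=
  exists u g r, RUM_CF u g r /\ rationalizes D p f u g r.

Definition qratio (p : X -> X -> R) (f : X -> X -> R -> R) (x y : X) (t : R)
  : R := (p x y * f x y t) / (p y x * f y x t).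

End Defs.

(* Main.v *)
Require Import Defs.
From mathcomp Require Import all_boot all_order all_algebra.
From mathcomp Require Import all_classical all_reals all_analysis.
From mathcomp Require Import measurable_realfun.
From mathcomp Require Import lra.
Import Order.TTheory GRing.Theory Num.Theory.
Import numFieldNormedType.Exports.
Local Open Scope classical_set_scope.
Local Open Scope ring_scope.

Section H.
Context (R : realType).
Local Notation mu := (@lebesgue_measure R).
Local Notation Rp := (`[0%R, +oo[%classic : set R).


Lemma density_tail (g : R -> R) : density g -> forall s,
  (\int[mu]_(v in `]s, +oo[) (g v)%:E = (1 - cdfR g s)%:E)%E.
Proof.
move=> [mg [g0 g1]] s.
have mA : measurable (`]-oo, s]%classic : set R) by [].
have mB : measurable (`]s, +oo[%classic : set R) by [].
have UT : `]-oo, s]%classic `|` `]s, +oo[%classic = [set: R].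
  by rewrite -setCitvr setvU.
have dis : [disjoint `]-oo, s]%classic & `]s, +oo[%classic].
  by rewrite -setCitvr disj_set2E setICl.
have := g1; rewrite -UT ge0_integral_setU//; last 2 first.
  - by apply/measurable_EFinP; rewrite UT.
  - by move=> v _; rewrite lee_fin.
have e0 : (0 <= \int[mu]_(v in `]-oo, s]) (g v)%:E)%E.
  by apply: integral_ge0 => v _; rewrite lee_fin.
have e1 : (\int[mu]_(v in `]-oo, s]) (g v)%:E <= 1)%E.
  rewrite -g1; apply: ge0_subset_integral => //.
  - exact/measurable_EFinP.
  - by move=> v _; rewrite lee_fin.
rewrite /cdfR /Rintegral.
set a := (\int[mu]_(v in `]-oo, s]) (g v)%:E)%E.
set b := (\int[mu]_(v in `]s, +oo[) (g v)%:E)%E.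
have afin : a \is a fin_num by rewrite ge0_fin_numE// (le_lt_trans e1)// ltry.
by move=> ab1; rewrite EFinB fineK// -ab1 addeC addeA [(- a + a)%E]addeC subee// add0e.
Qed.



Lemma layer (h : R -> R) : measurable_fun setT h -> (forall v, 0 <= h v) ->
 (\int[mu]_(v in `[0%R, +oo[) (v * h v)%:E =
  \int[mu]_(s in `[0%R, +oo[) \int[mu]_(v in `]s, +oo[) (h v)%:E)%E.
Proof.
move=> mh h0.
pose F (p : R * R) := (\1_`[0, p.1[ p.2 * h p.1)%:E.
have mF : measurable_fun setT F.
  apply/measurable_EFinP; apply: measurable_funM => /=; last first.
    exact: measurableT_comp.
  apply: measurable_indic => /=.
  pose fsnd (p : R * R) := (0 <= p.2)%R.
  pose f21 (p : R * R) := (p.2 < p.1)%R.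
  rewrite [X in measurable X](_ : _ =
      fsnd @^-1` [set true] `&` f21 @^-1` [set true]); last first.
    by apply/seteqP; split => p; rewrite in_itv/= => /andP.
  apply: measurableI.
  - have : measurable_fun setT fsnd by exact: measurable_fun_ler.
    by move=> /(_ measurableT [set true]); rewrite setTI; exact.
  - have : measurable_fun setT f21 by exact: measurable_fun_ltr.
    by move=> /(_ measurableT [set true]); rewrite setTI; exact.
have F0 : forall p, (0 <= F p)%E.
  by move=> p; rewrite /F lee_fin mulr_ge0// indicE; case: (_ \in _).
transitivity (\int[mu]_v \int[mu]_s F (v, s))%E.
  rewrite integral_mkcond; apply: eq_integral => v _ /=.
  rewrite /F /=.
  under eq_integral do rewrite mulrC EFinM.
  rewrite ge0_integralZl_EFin//; try by [move=> s _; rewrite lee_fin indicE; case: (_ \in _)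
    | apply/measurable_EFinP; exact: measurable_indic].
  rewrite integral_indic// setIT [X in (_ * X)%E]lebesgue_measure_itv/= lte_fin patchE.
  have [v0|v0|<-] := ltgtP 0 v.
  - by rewrite mem_set/= ?in_itv/= ?andbT ?(ltW v0)// EFinN sube0 -EFinM mulrC.
  - rewrite memNset/=; last by rewrite ?in_itv/= ?andbT => /(lt_le_trans v0); rewrite ltxx.
    by rewrite mule0.
  - by rewrite mem_set/= ?in_itv/= ?lexx// mul0r mule0.
transitivity (\int[mu]_s \int[mu]_v F (v, s))%E.
  have := (@fubini_tonelli _ _ _ _ R mu mu F mF F0).
  by move=> ->.
rewrite [RHS]integral_mkcond; apply: eq_integral => s _ /=.
rewrite patchE.
have [s0|s0] := leP 0 s.
  rewrite mem_set/=; last by rewrite in_itv/= s0.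
  rewrite [RHS]integral_mkcond; apply: eq_integral => v _ /=.
  rewrite /F /= patchE indicE.
  have [sv|vs] := ltP s v.
    by rewrite !mem_set/= ?in_itv/= ?s0 ?sv ?andbT// mul1r.
  rewrite memNset; last by rewrite /= in_itv/= => /andP[_]; rewrite ltNge vs.
  by rewrite memNset ?mul0r// /= in_itv/= andbT ltNge vs.
rewrite memNset/=; last by rewrite in_itv/= andbT => /(lt_le_trans s0); rewrite ltxx.
apply: integral0_eq => v _; rewrite /F /= indicE memNset ?mul0r//=.
by rewrite in_itv/= leNgt s0.
Qed.




Definition nice (phi : R -> R) : Prop :=
  measurable_fun Rp phi /\ (forall t, 0 <= t -> 0 <= phi t) /\
  (\int[mu]_(t in Rp) (phi t)%:E < +oo)%E.

Definition II (phi : R -> R) (B : set R) : R :=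
  fine (\int[mu]_(t in B) (phi t)%:E)%E.

Lemma IE phi B : nice phi -> measurable B -> B `<=` Rp ->
  (II phi B)%:E = (\int[mu]_(t in B) (phi t)%:E)%E.
Proof.
move=> [mphi [phi0 phifin]] mB BRp; rewrite /II fineK//.
rewrite ge0_fin_numE; last by apply: integral_ge0 => t /BRp; rewrite /= in_itv/= andbT => /phi0; rewrite lee_fin.
apply: le_lt_trans phifin; apply: ge0_subset_integral => //.
- exact/measurable_EFinP.
- by move=> t; rewrite /= in_itv/= andbT => /phi0; rewrite lee_fin.
Qed.

Lemma IU phi B C : nice phi -> measurable B -> measurable C ->
  B `<=` Rp -> C `<=` Rp -> [disjoint B & C] ->
  II phi (B `|` C) = II phi B + II phi C.
Proof.
move=> nphi mB mC BRp CRp BC.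
have mBC : measurable (B `|` C) by exact: measurableU.
have BCRp : B `|` C `<=` Rp by move=> t [/BRp|/CRp].
apply/EFin_inj; rewrite EFinD (IE _ _ nphi mBC BCRp) (IE _ _ nphi mB BRp) (IE _ _ nphi mC CRp).
have [mphi [phi0 _]] := nphi.
rewrite ge0_integral_setU//.
- by apply/measurable_EFinP; apply: measurable_funS mphi.
- by move=> t /BCRp; rewrite /= in_itv/= andbT => /phi0; rewrite lee_fin.
Qed.

Lemma Ile phi psi B : nice phi -> nice psi -> measurable B -> B `<=` Rp ->
  (\forall t \ae mu, 0 <= t -> phi t <= psi t) -> II phi B <= II psi B.
Proof.
move=> nphi npsi mB BRp hae; rewrite -lee_fin !IE//.
have [mphi [phi0 _]] := nphi; have [mpsi [psi0 _]] := npsi.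
apply: ae_ge0_le_integral => //.
- by move=> t /BRp; rewrite /= in_itv/= andbT => /phi0; rewrite lee_fin.
- by apply/measurable_EFinP; exact: measurable_funS mphi.
- by move=> t /BRp; rewrite /= in_itv/= andbT => /psi0; rewrite lee_fin.
- by apply/measurable_EFinP; exact: measurable_funS mpsi.
- case: hae => N [mN N0 HN]; exists N; split => // t /= Ht; apply: HN => /= H.
  apply: Ht => /BRp; rewrite /= in_itv/= andbT => /H.
  by rewrite lee_fin.
Qed.

Lemma Ilt phi psi B : nice phi -> nice psi -> measurable B -> B `<=` Rp ->
  (0 < mu B)%E -> (forall t, B t -> phi t < psi t) -> II phi B < II psi B.
Proof.
move=> nphi npsi mB BRp muB hlt.
have [mphi [phi0 _]] := nphi; have [mpsi [psi0 _]] := npsi.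
have mk : measurable_fun B (fun t => psi t - phi t).
  by apply: measurable_funB; [exact: measurable_funS mpsi|exact: measurable_funS mphi].
have k0 : forall t, B t -> (0 <= ((psi t - phi t)%:E))%E.
  by move=> t /hlt; rewrite lee_fin subr_ge0 => /ltW.
have e : (\int[mu]_(t in B) (psi t)%:E =
    \int[mu]_(t in B) (phi t)%:E + \int[mu]_(t in B) (psi t - phi t)%:E)%E.
  rewrite -ge0_integralD//.
  - by apply: eq_integral => t _; rewrite -EFinD addrC subrK.
  - by move=> t /BRp; rewrite /= in_itv/= andbT => /phi0; rewrite lee_fin.
  - by apply/measurable_EFinP; exact: measurable_funS mphi.
  - exact/measurable_EFinP.
have kpos : (0 < \int[mu]_(t in B) (psi t - phi t)%:E)%E.
  rewrite lt0e integral_ge0// andbT; apply/negP => /eqP k0'.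
  have : (\int[mu]_(t in B) `|(psi t - phi t)%:E| = 0)%E.
    by rewrite -k0'; apply: eq_integral => t /set_mem Bt; rewrite gee0_abs// k0.
  have mkE : measurable_fun B (fun t => (psi t - phi t)%:E) by exact/measurable_EFinP.
  move/(ae_eq_integral_abs mu mB mkE).
  move=> [N [mN N0 BN]].
  suff : (mu B <= mu N)%E by rewrite N0 leNgt muB.
  apply: le_measure; rewrite ?inE//.
  move=> t Bt; apply: BN => /= /(_ Bt) /eqP.
  by rewrite eqe subr_eq0 gt_eqF// hlt.
rewrite -lte_fin !IE// e.
have phifin : (\int[mu]_(t in B) (phi t)%:E)%E \is a fin_num.
  by rewrite -IE.
by rewrite lteDl.
Qed.


Lemma nice_scale f k : pos_density f -> 0 <= k -> nice (fun t => k * f t).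
Proof.
move=> [mf [f0 f1]] k0; split; [|split].
- by apply: measurable_funM => //; exact: measurable_cst.
- by move=> t t0; rewrite mulr_ge0// ltW// f0.
- under eq_integral do rewrite EFinM.
  rewrite ge0_integralZl_EFin//.
  + by rewrite f1 mule1 ltry.
  + by move=> t; rewrite /= in_itv/= andbT => /f0/ltW; rewrite lee_fin.
  + exact/measurable_EFinP.
Qed.

Lemma cdfP_II f k t : pos_density f -> 0 <= k ->
  k * cdfP f t = II (fun s => k * f s) `[0%R, t].
Proof.
move=> pf k0.
have sub : `[0%R, t]%classic `<=` Rp by apply: subset_itvl; rewrite bnd_simp.
have n1 := nice_scale _ _ pf ler01.
have nk := nice_scale _ _ pf k0.
apply/EFin_inj; rewrite (IE _ _ nk _ sub)//.
have e : cdfP f t = II (fun s => 1 * f s) `[0%R, t].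
  by rewrite /II; under eq_integral do rewrite mul1r.
rewrite EFinM e (IE _ _ n1 _ sub)//.
under [RHS]eq_integral do rewrite EFinM.
have [mf [f0 _]] := pf.
rewrite ge0_integralZl_EFin//.
- by congr (_ * _)%E; apply: eq_integral => s _; rewrite mul1r.
- by move=> s /sub; rewrite /= in_itv/= andbT => /f0/ltW; rewrite lee_fin.
- by apply/measurable_EFinP; exact: measurable_funS mf.
Qed.

Lemma Hmono phi psi t t' : nice phi -> nice psi ->
  (\forall s \ae mu, 0 <= s -> phi s <= psi s) -> 0 <= t -> t <= t' ->
  II psi `[0%R, t] - II phi `[0%R, t] <= II psi `[0%R, t'] - II phi `[0%R, t'].
Proof.
move=> nphi npsi hae t0 tt'.
have e : `[0%R, t']%classic = `[0%R, t]%classic `|` `]t, t']%classic.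
  by apply: itv_bndbnd_setU; rewrite bnd_simp.
have d : [disjoint `[0%R, t]%classic & `]t, t']%classic].
  by apply: lt_disjoint => a b; rewrite !in_itv/= => /andP[_ a_t] /andP[tb _]; exact: le_lt_trans a_t tb.
have s1 : `[0%R, t]%classic `<=` Rp by apply: subset_itvl; rewrite bnd_simp.
have s2 : `]t, t']%classic `<=` Rp.
  by move=> a; rewrite /= !in_itv/= andbT => /andP[/ltW ta _]; exact: le_trans ta.
rewrite e !IU//.
have := Ile _ _ _ nphi npsi (measurable_itv _) s2 hae.
lra.
Qed.

Lemma H_ge0 phi psi t : nice phi -> nice psi ->
  (\forall s \ae mu, 0 <= s -> phi s <= psi s) ->
  0 <= II psi `[0%R, t] - II phi `[0%R, t].
Proof.
move=> nphi npsi hae; rewrite subr_ge0; apply: Ile => //.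
by apply: subset_itvl; rewrite bnd_simp.
Qed.

Lemma t1_exists phi psi (A : set R) : nice phi -> nice psi ->
  (\forall s \ae mu, 0 <= s -> phi s <= psi s) ->
  measurable A -> A `<=` Rp -> (0 < mu A)%E -> (forall t, A t -> phi t < psi t) ->
  exists t1, 0 < t1 /\ II phi `[0%R, t1] < II psi `[0%R, t1].
Proof.
move=> nphi npsi hae mA ARp muA hlt.
have [n nP] : exists n : nat, (0 < mu (A `&` `[0%R, n%:R]))%E.
  apply/not_existsP => hn.
  have neg k : mu.-negligible (A `&` `[0%R, k%:R]).
    apply/negligibleP; first exact: measurableI.
    apply/eqP; rewrite eq_le measure_ge0 andbT leNgt; apply/negP; exact: hn.
  have := negligible_bigcup neg.
  move=> [N [mN N0 HN]].
  suff : (mu A <= mu N)%E by rewrite N0 leNgt muA.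
  apply: le_measure; rewrite ?inE//.
  move=> t At; apply: HN; exists (Num.truncn t).+1 => //; split => //.
  have := ARp _ At; rewrite /= !in_itv/= andbT => t0; rewrite t0/=.
  exact/ltW/truncnS_gt.
set B := A `&` `[0%R, n%:R].
pose t1 : R := n%:R + 1.
have t1pos : 0 < t1 by rewrite /t1 ltr_wpDl.
exists t1; split => //.
have mB : measurable B by exact: measurableI.
have BI : B `<=` `[0%R, t1]%classic.
  move=> t [_]; rewrite /= !in_itv/= => /andP[-> tn]/=.
  by rewrite (le_trans tn)// /t1 lerDl.
have e : `[0%R, t1]%classic = B `|` (`[0%R, t1]%classic `\` B) by rewrite setDUK.
have s1 : `[0%R, t1]%classic `<=` Rp by apply: subset_itvl; rewrite bnd_simp.
have mC : measurable (`[0%R, t1]%classic `\` B) by apply: measurableD.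
have sC : `[0%R, t1]%classic `\` B `<=` Rp by move=> t [/s1].
have sB : B `<=` Rp by move=> t /BI/s1.
have d : [disjoint B & `[0%R, t1]%classic `\` B] by rewrite disj_set2E setDIK.
rewrite e !IU//.
have := Ile _ _ _ nphi npsi mC sC hae.
have := Ilt _ _ _ nphi npsi mB sB nP (fun t Bt => hlt t Bt.1).
lra.
Qed.

End H.

Section Main.
Context (R : realType) (X : finType) (D : {set X * X}) (p : X -> X -> R)
  (f : X -> X -> R -> R) (x y : X) (u : X -> R) (g : X -> X -> R -> R)
  (r : R -> R).
Hypotheses (HD : isD D) (Hpf : SCF_RT D p f) (Hxy : (x, y) \in D)
  (Hm : RUM_CF u g r) (Hr : rationalizes D p f u g r).
Local Notation mu := (@lebesgue_measure R).

Let a1 s := 1 - cdfR (g x y) s.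
Let a2 s := 1 - cdfR (g y x) s.

Let Hyx : (y, x) \in D. Proof. by case: HD => _ [_]; apply. Qed.
Let xy : x != y. Proof. by case: HD => + _; apply. Qed.
Let yx : y != x. Proof. by rewrite eq_sym. Qed.

Let P0 : 0 < p x y. Proof. by case: Hpf => + _ => /(_ _ _ Hxy) []. Qed.
Let Q0 : 0 < p y x. Proof. by case: Hpf => + _ => /(_ _ _ Hyx) []. Qed.
Let PQ : p x y + p y x = 1. Proof. by case: Hpf => + _ => /(_ _ _ Hxy) []. Qed.

Let dx : density (g x y). Proof. by case: Hm => /(_ _ _ xy) []. Qed.
Let dy : density (g y x). Proof. by case: Hm => /(_ _ _ yx) []. Qed.

Let a1_tail s : (\int[mu]_(v in `]s, +oo[) (g x y v)%:E = (a1 s)%:E)%E.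
Proof. exact: density_tail. Qed.
Let a2_tail s : (\int[mu]_(v in `]s, +oo[) (g y x v)%:E = (a2 s)%:E)%E.
Proof. exact: density_tail. Qed.

Lemma tail_ni (h : R -> R) : density h -> {homo (fun s => 1 - cdfR h s) : s t / s <= t >-> t <= s}.
Proof.
move=> dh s t st; rewrite -lee_fin -!density_tail//.
have [mh [h0 _]] := dh.
apply: ge0_subset_integral => //.
- exact/measurable_EFinP/measurable_funTS.
- by move=> v _; rewrite lee_fin.
- by apply: subset_itvr; rewrite bnd_simp.
Qed.

Lemma tail_ge0 (h : R -> R) s : density h -> 0 <= 1 - cdfR h s.
Proof.
move=> dh; rewrite -lee_fin -density_tail//; apply: integral_ge0 => v _.
by have [_ [h0 _]] := dh; rewrite lee_fin.
Qed.


Let a1_rat s : 0 < s -> 0 < r s -> a1 s = p x y * cdfP (f x y) (r s).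
Proof.
move=> s0 rs0; have [h0 hr] := Hr _ _ Hxy.
have := hr (r s) rs0 s s0 erefl; rewrite h0 (_ : 1 - p y x = p x y); last by have := PQ; lra.
by move=> <-; rewrite /a1 mulrC divfK// gt_eqF.
Qed.

Let a2_rat s : 0 < s -> 0 < r s -> a2 s = p y x * cdfP (f y x) (r s).
Proof.
move=> s0 rs0; have [h0 hr] := Hr _ _ Hyx.
have := hr (r s) rs0 s s0 erefl; rewrite h0 (_ : 1 - p x y = p y x); last by have := PQ; lra.
by move=> <-; rewrite /a2 mulrC divfK// gt_eqF.
Qed.

Let a2_zero s : 0 < s -> r s = 0 -> a2 s <= 0.
Proof.
move=> s0 rs0.
have [_ [rc [_ [rlim _]]]] := Hm.2.
rewrite leNgt; apply/negP => a2pos.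
have [mf [fpos f1]] : pos_density (f y x) by case: Hpf => _ /(_ _ _ Hyx).
have intf : mu.-integrable `[0%R, 1%R] (EFin \o f y x).
  apply/integrableP; split.
    apply/measurable_EFinP; apply: measurable_funS mf => //.
    by apply: subset_itvl; rewrite bnd_simp.
  apply: (@le_lt_trans _ _ (\int[mu]_(t in `[0%R, 1%R]) (f y x t)%:E)%E).
    rewrite le_eqVlt; apply/orP; left; apply/eqP; apply: eq_integral => t; rewrite inE/= in_itv/= => /andP[t0 _].
    by rewrite ger0_norm// ltW// fpos.
  apply: (@le_lt_trans _ _ 1%E); last exact: ltry.
  rewrite -f1; apply: ge0_subset_integral => //.
  - exact/measurable_EFinP.
  - by move=> t; rewrite /= in_itv/= andbT => /fpos/ltW; rewrite lee_fin.
  - by apply: subset_itvl; rewrite bnd_simp.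
have cont := parameterized_integral_continuous ler01 intf.
have [_ cvg0 _] := (continuous_within_itvP _ ltr01).1 cont.
have F00 : parameterized_integral mu 0 0 (f y x) = 0.
  by rewrite /parameterized_integral set_itv1 Rintegral_set1.
rewrite F00 in cvg0.
have z0 : 0 < a2 s / p y x by rewrite divr_gt0.
have near1 := cvgr_lt _ cvg0 _ z0.
have [t [t0 Ft]] : exists t, 0 < t /\ p y x * cdfP (f y x) t < a2 s.
  have : \forall t \near 0^'+, 0 < t /\
      parameterized_integral mu 0 t (f y x) < a2 s / p y x.
    near=> t; split; [near: t; exact: nbhs_right_gt| near: t; exact: near1].
  move=> /filter_ex [t [t0 Ft]]; exists t; split => //.
  by rewrite mulrC -ltr_pdivlMr.
have [v [[v0 vs] tv]] : exists v, (0 < v /\ v < s) /\ t <= r v.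
  have : \forall v \near 0^'+, (0 < v /\ v < s) /\ t <= r v.
    near=> v; split; first split.
    - by near: v; exact: nbhs_right_gt.
    - by near: v; exact: nbhs_right_lt.
    - by near: v; move: rlim => /cvgryPge; apply.
  by move=> /filter_ex.
have rcv : {within `[v, s], continuous r}.
  apply: continuous_subspaceW rc => w; rewrite /= !in_itv/= andbT.
  by move=> /andP[vw _]; exact: lt_le_trans v0 vw.
have [c cvs rct] : exists2 c, c \in `[v, s] & r c = t.
  apply: IVT => //; first exact: ltW.
  rewrite rs0; apply/andP; split.
    by rewrite ge_min; apply/orP; right; exact: ltW.
  by rewrite le_max tv.
have c0 : 0 < c by move: cvs; rewrite in_itv/= => /andP[vc _]; exact: lt_le_trans v0 vc.
have cs : c <= s by move: cvs; rewrite in_itv/= => /andP[_].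
have := @tail_ni _ dy _ _ cs; rewrite -/(a2 s) -/(a2 c).
rewrite [a2 c]a2_rat ?rct//.
lra.
Unshelve. all: by end_near.
Qed.


Let a_meas (h : R -> R) : density h ->
  measurable_fun (`]0%R, +oo[%classic : set R) (fun s => (1 - cdfR h s)%:E).
Proof.
move=> dh; apply/measurable_EFinP; apply: nonincreasing_measurable => //.
exact: tail_ni.
Qed.

Lemma main_bound c d : 0 <= c -> 0 < d ->
  (forall s, 0 < s -> a2 s + c * \1_`]0%R, d[ s <= a1 s) -> c * d <= u x - u y.
Proof.
move=> c0 d0 cond.
have [_ [ix [ex [symx _]]]] := Hm.1 _ _ xy.
have [_ [iy _]] := Hm.1 _ _ yx.
have [mgx [gx0 _]] := dx. have [mgy [gy0 _]] := dy.
have UT : (`]-oo, 0%R]%classic : set R) `|` `]0%R, +oo[%classic = [set: R].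
  by rewrite -setCitvr setvU.
have dis : [disjoint (`]-oo, 0%R]%classic : set R) & `]0%R, +oo[%classic].
  by rewrite -setCitvr disj_set2E setICl.
have e1 : ((u x - u y)%:E = \int[mu]_(v in `]-oo, 0%R]) (v * g x y v)%:E +
    \int[mu]_(v in `]0%R, +oo[) (v * g x y v)%:E)%E.
  rewrite -ex -UT integral_setU//; rewrite UT; exact: measurable_int ix.
have e2 : (\int[mu]_(v in `]-oo, 0%R]) (v * g x y v)%:E =
    - \int[mu]_(v in `[0%R, +oo[) (v * g y x v)%:E)%E.
  transitivity (\int[mu]_(v in `]-oo, 0%R]) - (`|v| * g x y v)%:E)%E.
    apply: eq_integral => v; rewrite inE/= in_itv/= => v0.
    by rewrite ler0_norm// mulNr opprK.
  rewrite integral_ge0N; last by move=> v _; rewrite lee_fin mulr_ge0.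
  congr (- _)%E.
  have mF : measurable_fun setT (fun w : R => (`|w| * g y x w)%:E).
    apply/measurable_EFinP; apply: measurable_funM => //.
  have F0 : forall w : R, (0 <= (`|w| * g y x w)%:E)%E.
    by move=> w; rewrite lee_fin mulr_ge0.
  transitivity (\int[mu]_(w in `]-oo, 0%R]) (`|- w| * g y x (- w))%:E)%E.
    by apply: eq_integral => v _ /=; rewrite normrN -symx.
  transitivity (\int[mu]_(w in `[0%R, +oo[) (`|w| * g y x w)%:E)%E.
    by symmetry; exact: (ge0_integration_by_substitution0 mF F0).
  apply: eq_integral => w; rewrite inE/= in_itv/= andbT => w0.
  by rewrite ger0_norm.
have mvg (h : R -> R) : measurable_fun setT h ->
    measurable_fun setT (fun v : R => (v * h v)%:E).
  by move=> mh; apply/measurable_EFinP; apply: measurable_funM.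
have e3 : (\int[mu]_(v in `]0%R, +oo[) (v * g x y v)%:E =
    \int[mu]_(v in `[0%R, +oo[) (v * g x y v)%:E)%E.
  by apply: integral_itv_obnd_cbnd; exact: measurable_funTS (mvg _ mgx).
have L (h : R -> R) : density h -> (\int[mu]_(v in `[0%R, +oo[) (v * h v)%:E =
    \int[mu]_(s in `]0%R, +oo[) (1 - cdfR h s)%:E)%E.
  move=> dh; have [mh [h0 _]] := dh.
  rewrite layer//.
  transitivity (\int[mu]_(s in `[0%R, +oo[) (1 - cdfR h s)%:E)%E.
    by apply: eq_integral => s _; rewrite density_tail.
  by symmetry; apply: integral_itv_obnd_cbnd; exact: a_meas.
have M2fin : (\int[mu]_(v in `[0%R, +oo[) (v * g y x v)%:E)%E \is a fin_num.
  rewrite ge0_fin_numE; last first.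
    by apply: integral_ge0 => v; rewrite /= in_itv/= andbT => v0; rewrite lee_fin mulr_ge0.
  have [_ /= iyfin] := integrableP _ _ _ iy.
  apply: le_lt_trans iyfin.
  apply: (@le_trans _ _ (\int[mu]_(v in `[0%R, +oo[) `|(v * g y x v)%:E|)%E).
    rewrite le_eqVlt; apply/orP; left; apply/eqP; apply: eq_integral => v.
    by rewrite inE/= in_itv/= andbT => v0; rewrite ger0_norm// mulr_ge0.
  apply: ge0_subset_integral => //.
  exact: measurableT_comp (mvg _ mgy).
have ed : (\int[mu]_(s in `]0%R, +oo[) (c * \1_`]0%R, d[ s)%:E = (c * d)%:E)%E.
  under eq_integral do rewrite EFinM.
  rewrite ge0_integralZl_EFin//; try by [move=> s _; rewrite lee_fin
    | exact/measurable_EFinP/measurable_indic].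
  rewrite integral_indic// setIidl; last by apply: subset_itvl; rewrite bnd_simp.
  by rewrite [X in (_ * X)%E]lebesgue_measure_itv/= lte_fin d0 EFinN sube0 -EFinM.
have mI : measurable_fun (`]0%R, +oo[%classic : set R)
    (fun s : R => (c * \1_(`]0%R, d[%classic : set R) s)%:E).
  apply/measurable_EFinP; apply: measurable_funM; first exact: measurable_cst.
  exact: measurable_indic.
have ineq : (\int[mu]_(s in `]0%R, +oo[) (a2 s)%:E + (c * d)%:E <=
    \int[mu]_(s in `]0%R, +oo[) (a1 s)%:E)%E.
  rewrite -ed -ge0_integralD//; try by [move=> s _; rewrite lee_fin tail_ge0
    | exact: a_meas | move=> s _; rewrite lee_fin mulr_ge0 | exact: mI].
  apply: ge0_le_integral => //.
  - by move=> s _; rewrite adde_ge0// lee_fin ?tail_ge0 ?mulr_ge0.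
  - by apply: emeasurable_funD; [exact: a_meas | exact: mI].
  - exact: a_meas.
  - move=> s; rewrite /= in_itv/= andbT => s0.
    by rewrite -EFinD lee_fin; exact: cond.
rewrite -lee_fin e1 e2 e3 !L//.
rewrite L// in M2fin.
move: ineq; rewrite -(fineK M2fin).
have : (0 <= \int[mu]_(s in `]0%R, +oo[) (a1 s)%:E)%E.
  by apply: integral_ge0 => s _; rewrite lee_fin tail_ge0.
case: (\int[mu]_(s in `]0%R, +oo[) (a1 s)%:E)%E => [m1| |]//= _.
  by rewrite -!EFinD !lee_fin; lra.
by move=> _; rewrite addey// leey.
Qed.


Let pfx : pos_density (f x y). Proof. by case: Hpf => _ /(_ _ _ Hxy). Qed.
Let pfy : pos_density (f y x). Proof. by case: Hpf => _ /(_ _ _ Hyx). Qed.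
Let psi := fun t => p x y * f x y t.
Let phi := fun t => p y x * f y x t.
Let npsi : nice R psi. Proof. exact: nice_scale pfx (ltW P0). Qed.
Let nphi : nice R phi. Proof. exact: nice_scale pfy (ltW Q0). Qed.

Let a1_II s : 0 < s -> 0 < r s -> a1 s = II R psi `[0%R, r s].
Proof. by move=> s0 rs0; rewrite a1_rat// cdfP_II// ltW. Qed.
Let a2_II s : 0 < s -> 0 < r s -> a2 s = II R phi `[0%R, r s].
Proof. by move=> s0 rs0; rewrite a2_rat// cdfP_II// ltW. Qed.

Lemma conv_ae : {ae mu, forall t : R, 0 <= t -> 1 <= qratio p f x y t} ->
  \forall t \ae mu, 0 <= t -> phi t <= psi t.
Proof.
case=> N [mN N0 HN]; exists N; split => // t /= Ht; apply: HN => /= H1.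
apply: Ht => t0; have := H1 t0; rewrite /qratio ler_pdivlMr ?mul1r//.
by apply: mulr_gt0 => //; have [_ [fp _]] := pfy; exact: fp.
Qed.

Lemma weak_cond : (\forall t \ae mu, 0 <= t -> phi t <= psi t) ->
  forall s, 0 < s -> a2 s <= a1 s.
Proof.
move=> hae s s0.
have [r0 _] := Hm.2.
have := r0 _ s0; rewrite le_eqVlt => /predU1P[rs0|rs0].
  have h1 : 0 <= a1 s := @tail_ge0 _ s dx.
  have := a2_zero _ s0 (esym rs0); lra.
rewrite a1_II// a2_II//; rewrite -subr_ge0; exact: H_ge0.
Qed.

Lemma res_weak : {ae mu, forall t : R, 0 <= t -> 1 <= qratio p f x y t} ->
  u y <= u x.
Proof.
move=> /conv_ae hae.
have := @main_bound 0 1 (lexx _) ltr01.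
rewrite mul0r subr_ge0; apply => s s0; rewrite mul0r addr0.
exact: weak_cond.
Qed.

Lemma res_strict : {ae mu, forall t : R, 0 <= t -> 1 <= qratio p f x y t} ->
  (exists A : set R, measurable A /\ A `<=` (`[0%R, +oo[%classic : set R) /\
      (0 < mu A)%E /\ (forall t, A t -> 1 < qratio p f x y t)) ->
  u y < u x.
Proof.
move=> /conv_ae hae [A [mA [ARp [muA hA]]]].
have hlt : forall t, A t -> phi t < psi t.
  move=> t At; have := hA t At; rewrite /qratio ltr_pdivlMr ?mul1r//.
  have := ARp _ At; rewrite /= in_itv/= andbT => t0.
  by apply: mulr_gt0 => //; have [_ [fp _]] := pfy; exact: fp.
have [t1 [t10 Ht1]] := t1_exists _ _ _ _ nphi npsi hae mA ARp muA hlt.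
set c := II R psi `[0%R, t1] - II R phi `[0%R, t1].
have c0 : 0 < c by rewrite /c subr_gt0.
have [_ [_ [_ [rlim _]]]] := Hm.2.
have := (cvgryPgt _).1 rlim t1.
move=> [e /= e0 He].
have := @main_bound c e (ltW c0) e0.
have ce : 0 < c * e by exact: mulr_gt0.
move=> H; suff : c * e <= u x - u y by lra.
apply: H => s s0.
rewrite indicE.
have [se|es] := ltP s e.
  rewrite mem_set/=; last by rewrite in_itv/= s0 se.
  have rs : t1 < r s.
    apply: He => //=; rewrite /ball_ /= sub0r normrN gtr0_norm//.
  have rs0 : 0 < r s by exact: lt_trans rs.
  rewrite a1_II// a2_II// mulr1.
  have := Hmono _ _ _ _ _ nphi npsi hae (ltW t10) (ltW rs).
  rewrite -/c; lra.
rewrite memNset/=; last by rewrite in_itv/= s0/= ltNge es.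
rewrite mulr0 addr0; exact: weak_cond.
Qed.

End Main.

Theorem corollary1 (R : realType) (X : finType) (D : {set X * X})
  (p : X -> X -> R) (f : X -> X -> R -> R)
  (HD : isD D) (Hpf : SCF_RT D p f) (Hrat : rationalizable D p f)
  (x y : X) (Hxy : (x, y) \in D) :
  {ae (@lebesgue_measure R), forall t : R, 0 <= t -> 1 <= qratio p f x y t} ->
  (forall u g r, RUM_CF u g r -> rationalizes D p f u g r -> u y <= u x) /\
  ((exists A : set R, measurable A /\ A `<=` (`[0%R, +oo[%classic : set R) /\
      (0 < (@lebesgue_measure R) A)%E /\
      (forall t, A t -> 1 < qratio p f x y t)) ->
   forall u g r, RUM_CF u g r -> rationalizes D p f u g r -> u y < u x).
Proof.
move=> hq; split.
  by move=> u g r Hm Hr; eapply res_weak; eassumption.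
by move=> hA u g r Hm Hr; eapply res_strict; eassumption.
Qed.
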